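(* Let ${\bf r}=(r_0,r_1,\dots)$ be a finitely supported sequence of nonnegative integers with $n=\sum_{d\ge1}r_d$, and let $k\ge0$ be an integer. Then $$|\mathcal{CF}_{{\bf r},k}|=\sum_{F\in\mathscr F({\bf r})}n!\prod_{v\in I(F)}\Big((d_v+k)-\frac{k}{h_v}\Big).$$
   Context: A plane tree is an unlabelled rooted tree in which the children of every vertex are linearly ordered; a plane forest is a finite linearly ordered sequence of plane trees. For vertices $u,v$ in a tree, $v$ is a descendant of $u$ if $u$ lies on the path from the root to $v$ (so $u$ is a descendant of itself). The degree $d_v$ is the number of children of $v$; $v$ is internal if $d_v\ge1$. $I(F)$ is the set of internal vertices of $F$. The hook length $h_v$ of an internal vertex $v$ is the number of internal vertices among the descendants of $v$ (including $v$). A plane forest has type ${\bf r}$ if it has exactly $r_i$ vertices of degree $i$ for all $i\ge0$; $\mathscr F({\bf r})$ is the set of such forests, and $n=\sum_{d\ge1}r_d$ is the number of internal vertices. A labelled forest is a plane forest $F$ together with a bijection (labelling) $I(F)\to[n]$. An internal vertex $v$ of a labelled forest is proper if no internal descendant of $v$ has a smaller label than $v$, and improper otherwise. Fix colors $c_1,c_2,\dots$ and distinct special colors $c_1',c_2',\dots$. A proper $k$-coloring of a labelled forest assigns to each internal vertex $v$ a color, taken from $\{c_1,\dots,c_{d_v}\}$ if $v$ is proper and from $\{c_1,\dots,c_{d_v}\}\cup\{c_1',\dots,c_k'\}$ if $v$ is improper. A $k$-colored labelled forest is a labelled forest together with a proper $k$-coloring; $\mathcal{CF}_{{\bf r},k}$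 is the set of $k$-colored labelled forests whose underlying plane forest has type ${\bf r}$. *)

(* Defs.v *)
From HB Require Import structures.
From mathcomp Require Import all_boot all_order all_algebra.
Set Implicit Arguments. Unset Strict Implicit. Unset Printing Implicit Defensive.
Import Order.TTheory GRing.Theory Num.Theory.

(** Plane trees: a vertex together with the (linearly ordered) list of
    its subtrees.  A plane forest is a [seq ptree]. *)
Inductive ptree := Node of seq ptree.

Fixpoint ptree_enc (t : ptree) : GenTree.tree unit :=
  let: Node ts := t in GenTree.Node 0 (map ptree_enc ts).
Fixpoint ptree_dec (g : GenTree.tree unit) : ptree :=
  match g with
  | GenTree.Leaf _ => Node [::]
  | GenTree.Node _ gs => Node (map ptree_dec gs)
  end.
Lemma ptree_encK : cancel ptree_enc ptree_dec.
Proof.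
rewrite /cancel; fix IH 1; case=> ts /=; congr Node.
elim: ts => [|t ts IHts] //=; by rewrite IH IHts.
Qed.
HB.instance Definition _ := Countable.copy ptree (can_type ptree_encK).

(** Vertices of a tree/forest are addressed by paths: a vertex of the forest
    [f] is [i :: p], where [i] is the index of its tree and [p] the list of
    child indices from the root.  [tverts]/[fverts] list all vertices in
    preorder, each paired with its degree (number of children). *)
Fixpoint tverts (t : ptree) : seq (seq nat * nat) :=
  let: Node ts := t in
  ([::], size ts) ::
  (fix go (i : nat) (ts : seq ptree) : seq (seq nat * nat) :=
     match ts with
     | [::] => [::]
     | t' :: ts' => [seq (i :: p.1, p.2) | p <- tverts t'] ++ go i.+1 ts'
     end) 0 ts.

Fixpoint fverts_from (i : nat) (f : seq ptree) : seq (seq nat * nat) :=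
  match f with
  | [::] => [::]
  | t :: f' => [seq (i :: p.1, p.2) | p <- tverts t] ++ fverts_from i.+1 f'
  end.

Definition fverts (f : seq ptree) := fverts_from 0 f.

(** Internal vertices I(F) (degree >= 1), in preorder. *)
Definition ivs (f : seq ptree) := [seq p <- fverts f | 0 < p.2].

(** u is an ancestor of v (v descendant of u, reflexive) iff the address of u
    is a prefix of the address of v.
    Hook length: number of internal descendants of the vertex at address a. *)
Definition hook (f : seq ptree) (a : seq nat) : nat :=
  count (fun p => prefix a p.1) (ivs f).

(** Type r (r_i = nth 0 r i, a finitely supported sequence). *)
Definition has_type (r : seq nat) (f : seq ptree) : Prop :=
  forall i, count (fun p => p.2 == i) (fverts f) = nth 0 r i.

Definition nint (r : seq nat) : nat := sumn (behead r).

Definition iaddr (f : seq ptree) (j : nat) := (nth ([::], 0) (ivs f) j).1.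
Definition ideg (f : seq ptree) (j : nat) := (nth ([::], 0) (ivs f) j).2.

(** A labelling of f is encoded as a list [lab] with [nth 0 lab j] the label
    of the j-th internal vertex; it is a bijection onto [n] = {1..n}
    iff [lab] is a permutation of [1..n] (and has size |I(F)|). *)
Definition proper (f : seq ptree) (lab : seq nat) (j : nat) : bool :=
  all (fun j' => prefix (iaddr f j) (iaddr f j') ==> (nth 0 lab j <= nth 0 lab j'))
      (iota 0 (size (ivs f))).

(** Colors: (i, false) is c_i and (i, true) is the special color c'_i
    (i >= 1).  A coloring is a list giving the color of the j-th internal
    vertex. *)
Definition color_ok (f : seq ptree) (lab : seq nat) (k j : nat) (c : nat * bool) : bool :=
  if c.2 then ~~ proper f lab j && (1 <= c.1 <= k)
  else 1 <= c.1 <= ideg f j.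

Definition cforest := (seq ptree * seq nat * seq (nat * bool))%type.

Definition is_kcolored (r : seq nat) (k : nat) (x : cforest) : Prop :=
  let: (f, lab, col) := x in
  [/\ has_type r f,
      size lab = size (ivs f),
      perm_eq lab (iota 1 (nint r)),
      size col = size (ivs f) &
      forall j, j < size col -> color_ok f lab k j (nth (0, false) col j)].

(* Main.v *)
Require Import Defs.
From HB Require Import structures.
From mathcomp Require Import all_boot all_order all_algebra.
From mathcomp Require Import zify ring.
Import Order.TTheory GRing.Theory Num.Theory.

Module Aux.
Set Implicit Arguments. Unset Strict Implicit. Unset Printing Implicit Defensive.


Lemma prefix_anti (s t : seq nat) : prefix s t -> prefix t s -> s = t.
Proof.
move=> st ts; have := size_prefix st; have := size_prefix ts => h1 h2.
move: st; rewrite prefixE => /eqP <-; apply: take_oversize; by [].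
Qed.

Lemma prefix_total (x y v : seq nat) : prefix x v -> prefix y v -> prefix x y || prefix y x.
Proof.
rewrite [prefix x v]prefixE [prefix y v]prefixE => /eqP ex /eqP ey.
case: (leqP (size x) (size y)) => h.
  apply/orP; left; rewrite prefixE; apply/eqP.
  by rewrite -{1}ey take_takel // ex.
apply/orP; right; rewrite prefixE; apply/eqP.
by rewrite -{1}ex take_takel ?ey // ltnW.
Qed.

Lemma prefix_size_lt (x y : seq nat) : prefix x y -> x != y -> size x < size y.
Proof.
move=> p ne; rewrite ltn_neqAle size_prefix // andbT; apply: contra ne => /eqP e.
by move: p; rewrite prefixE e take_size eq_sym.
Qed.

Definition propA (A s : seq (seq nat)) (j : seq nat) :=
  all (fun u => prefix j u ==> (index j s <= index u s)) A.
Definition hk (A : seq (seq nat)) (j : seq nat) := count (prefix j) A.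
Definition noanc (S : pred (seq nat)) (A : seq (seq nat)) (x : seq nat) :=
  all (fun j => S j ==> ~~ prefix j x) (rem x A).

Lemma noancP (S : pred (seq nat)) A x : uniq A -> reflect (forall j, j \in A -> S j -> j != x -> ~~ prefix j x) (noanc S A x).
Proof.
move=> uA; rewrite /noanc rem_filter //; apply: (iffP allP) => H.
  move=> j jA Sj jx; have := H j; rewrite mem_filter /= jx jA Sj => /(_ isT) //.
move=> j; rewrite mem_filter /= => /andP[jx jA]; apply/implyP => Sj; exact: H.
Qed.

Lemma noancN (S : pred (seq nat)) A x : uniq A -> ~~ noanc S A x ->
  exists j, [/\ j \in A, S j, j != x & prefix j x].
Proof.
move=> uA; rewrite /noanc rem_filter // => /allPn[j]; rewrite mem_filter /=.
case/andP=> jx jA; rewrite negb_imply negbK => /andP[Sj pj]; by exists j.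
Qed.

Definition Qv (S : pred (seq nat)) A v x := noanc S A x && (if S x then prefix x v else x == v).

Lemma Qv_uniq (S : pred (seq nat)) A v x y : uniq A -> x \in A -> y \in A -> Qv S A v x -> Qv S A v y -> x = y.
Proof.
move=> uA xA yA /andP[/(@noancP S _ _ uA) nx Hx] /andP[/(@noancP S _ _ uA) ny Hy].
case Sx: (S x) Hx; case Sy: (S y) Hy => Hy Hx.
- case: (eqVneq x y) => // ne.
  case/orP: (prefix_total Hx Hy) => p.
    by move: (ny x xA Sx); rewrite ne p => /(_ isT).
  by move: (nx y yA Sy); rewrite eq_sym ne p => /(_ isT).
- move/eqP: Hy => Hy; subst v; case: (eqVneq x y) => // ne.
  by move: (ny x xA Sx); rewrite ne Hx => /(_ isT).
- move/eqP: Hx => Hx; subst v; case: (eqVneq x y) => // ne.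
  by move: (nx y yA Sy); rewrite eq_sym ne Hy => /(_ isT).
- by move/eqP: Hx => ->; move/eqP: Hy => ->.
Qed.

Lemma Qv_exists (S : pred (seq nat)) A v : uniq A -> v \in A -> exists2 x, x \in A & Qv S A v x.
Proof.
move=> uA vA.
have key : forall m y, size y <= m -> y \in A -> S y -> prefix y v ->
    exists2 x, x \in A & Qv S A v x.
  elim=> [|m IH] y sy yA Sy py.
  - case: y sy yA Sy py => // _ yA Sy py; exists [::] => //.
    rewrite /Qv Sy py andbT; apply/(@noancP S _ _ uA) => j _ _ jn.
    by rewrite prefixs0.
  - case na: (noanc S A y); first by exists y => //; rewrite /Qv na Sy py.
    have [j [jA Sj jy pj]] := noancN uA (negbT na).
    apply: (IH j) => //; last exact: prefix_trans pj py.
    by rewrite -ltnS (leq_trans (prefix_size_lt pj jy)).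
case Sv: (S v); first by apply: (key (size v) v) => //; rewrite prefix_refl.
case na: (noanc S A v); first by exists v => //; rewrite /Qv na Sv eqxx.
have [j [jA Sj jy pj]] := noancN uA (negbT na).
by apply: (key (size j) j).
Qed.

Lemma count_sumb (T : Type) (a : pred T) (s : seq T) : count a s = \sum_(x <- s) (a x : nat).
Proof. by rewrite -sum1_count big_mkcond /=; apply: eq_bigr => x _; case: (a x). Qed.

Lemma count_one (T : eqType) (a : pred T) (s : seq T) x :
  uniq s -> x \in s -> a x -> (forall y, y \in s -> a y -> y = x) -> count a s = 1.
Proof.
move=> us xs ax H; rewrite (@eq_in_count _ _ (pred1 x)); first by rewrite count_uniq_mem ?xs.
move=> y ys /=; apply/idP/eqP; [exact: H | by move=> ->].
Qed.

Lemma count_id (S : pred (seq nat)) A : uniq A ->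
  \sum_(x <- A) (noanc S A x) * (if S x then hk A x else 1) = size A.
Proof.
move=> uA.
transitivity (\sum_(x <- A) \sum_(v <- A) (Qv S A v x : nat)).
  apply: eq_big_seq => x xA; rewrite /Qv /hk.
  case: (noanc S A x); last by rewrite mul0n big1 // => v _; rewrite andFb.
  rewrite mul1n; case: (S x); first by rewrite count_sumb.
  rewrite -count_sumb (@count_one _ _ _ x) //= ?eqxx //.
  by move=> y _ /eqP.
rewrite exchange_big /= -sum1_size; apply: eq_big_seq => v vA.
rewrite -count_sumb; have [x xA Qx] := Qv_exists S uA vA.
apply: (count_one uA xA Qx) => y yA Qy; exact: (Qv_uniq uA yA xA Qy Qx).
Qed.

Lemma count_allpairs (X Y Z : Type) (P : pred Z) (f : X -> Y -> Z) (s : seq X) (t : X -> seq Y) :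
  count P [seq f x y | x <- s, y <- t x] = \sum_(x <- s) count (fun y => P (f x y)) (t x).
Proof. by elim: s => [|x s IH]; rewrite ?big_nil ?big_cons //= count_cat count_map IH. Qed.

Definition allS (S : pred (seq nat)) A s := all (fun j => S j ==> propA A s j) A.

Lemma allS_cons (S : pred (seq nat)) A x t : uniq A -> x \in A ->
  allS S A (x :: t) = noanc S A x && allS S (rem x A) t.
Proof.
move=> uA xA; rewrite /allS (perm_all _ (perm_to_rem xA)) /=.
have -> : propA A (x :: t) x.
  apply/allP => u _ /=; rewrite [index x _]/index /= eqxx; exact: implybT.
rewrite /noanc -all_predI implybT /=; apply: eq_in_all => j jA' /=.
have jx : (j == x) = false.
  by apply: negbTE; move: jA'; rewrite rem_filter // mem_filter => /andP[].
rewrite /propA (perm_all _ (perm_to_rem xA)) /= eq_sym jx eqxx /= ltn0 implybF.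
case: (S j) => //=.
congr andb; apply: eq_in_all => u uA' /=.
have ux : (u == x) = false.
  by apply: negbTE; move: uA'; rewrite rem_filter // mem_filter => /andP[].
by rewrite eq_sym ux ltnS.
Qed.

Lemma countbA (T : Type) (b : bool) (P : pred T) s :
  count (fun y => b && P y) s = b * count P s.
Proof. by case: b; rewrite ?mul1n ?mul0n //; elim: s. Qed.

Lemma Ncount (S : pred (seq nat)) n : forall A, size A = n -> uniq A ->
  count (allS S A) (permutations A) * \prod_(j <- A | S j) hk A j = n`!.
Proof.
elim: n => [|n IH] A sA uA.
  by case: A sA uA => // _ _; rewrite big_nil.
have sA0 : 0 < size A by rewrite sA.
rewrite (permP (permutationsE sA0)) undup_id // count_allpairs big_distrl /=.
rewrite factS -sA -(count_id S uA) big_distrl /=.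
apply: eq_big_seq => x xA.
have sA' : size (rem x A) = n by rewrite size_rem // sA.
have uA' : uniq (rem x A) by exact: rem_uniq.
rewrite (@eq_count _ _ (fun t => noanc S A x && allS S (rem x A) t)); last first.
  by move=> t; rewrite allS_cons.
rewrite countbA; case na: (noanc S A x); rewrite ?mul0n // !mul1n.
rewrite (perm_big _ (perm_to_rem xA)) big_cons.
have -> : \prod_(j <- rem x A | S j) hk A j = \prod_(j <- rem x A | S j) hk (rem x A) j.
  rewrite big_seq_cond [in RHS]big_seq_cond; apply: eq_bigr => j /andP[jA' Sj].
  have jA : j \in A by exact: (mem_rem jA').
  have jx : j != x by move: jA'; rewrite rem_filter // mem_filter => /andP[].
  rewrite /hk (permP (perm_to_rem xA)) /=.
  by move/(@noancP S _ _ uA): na => /(_ j jA Sj jx) /negbTE ->.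
have := IH _ sA' uA' => <-.
by case: (S x); rewrite ?mul1n // mulnCA.
Qed.

Open Scope ring_scope.

Lemma prod_bool_nat (I : finType) (P : pred I) (Q : pred I) :
  \prod_(i | P i) ((Q i)%:R : rat) = ([forall i, P i ==> Q i])%:R.
Proof.
case E: [forall i, P i ==> Q i].
  by rewrite big1 // => i Pi; move/forallP: E => /(_ i); rewrite Pi => /= ->.
have : ~~ [forall i, P i ==> Q i] by rewrite E.
rewrite negb_forall => /existsP[i].
rewrite negb_imply => /andP[Pi Qi]; rewrite (bigD1 i) //= (negbTE Qi) mul0r //.
Qed.

Lemma sum_bool_count (T : Type) (P : pred T) (s : seq T) :
  \sum_(x <- s) ((P x)%:R : rat) = (count P s)%:R.
Proof. by elim: s => [|x s IH]; rewrite ?big_nil ?big_cons //= IH natrD. Qed.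

Lemma weighted (A : seq (seq nat)) (a b : nat -> rat) : uniq A ->
 \sum_(s <- permutations A) \prod_(j < size A) (a j + b j * (propA A s (nth [::] A j))%:R)
 = (size A)`!%:R * \prod_(j < size A) (a j + b j / (hk A (nth [::] A j))%:R).
Proof.
move=> uA; set n := size A.
pose X s (j : 'I_n) := propA A s (nth [::] A j).
pose h (j : 'I_n) := hk A (nth [::] A j).
have E1 : forall (c d : 'I_n -> rat), \prod_(j < n) (a j + c j * d j) =
    \sum_(f : {ffun 'I_n -> bool}) \prod_(j < n) (if f j then c j * d j else a j).
  move=> c d; rewrite -(bigA_distr_bigA (fun (j : 'I_n) (bb : bool) => if bb then c j * d j else a j)) /=.
  apply: eq_bigr => j _.
  by rewrite big_bool /= addrC.
rewrite (eq_bigr _ (fun s _ => E1 _ (fun j => (X s j)%:R))) exchange_big /=.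
have E2 : \prod_(j < n) (a j + b j / (hk A (nth [::] A j))%:R) =
    \sum_(f : {ffun 'I_n -> bool}) \prod_(j < n) (if f j then b j * (h j)%:R^-1 else a j)
  := E1 b (fun j => (h j)%:R^-1).
rewrite E2 big_distrr /=.
apply: eq_bigr => f _.
pose S u := [exists j : 'I_n, f j && (nth [::] A j == u)].
have HS : forall j : 'I_n, S (nth [::] A j) = f j.
  move=> j; apply/existsP/idP => [[j' /andP[fj' /eqP e]] | fj]; last by exists j; rewrite fj eqxx.
  have : j' = j.
    apply: val_inj; apply/eqP; rewrite -(nth_uniq [::] _ _ uA) ?e //; exact: ltn_ord.
  by move=> <-.
pose c j := if f j then b j else a j.
have split : forall d : 'I_n -> rat, \prod_(j < n) (if f j then b j * d j else a j) =
    (\prod_(j < n) c j) * \prod_(j < n | f j) d j.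
  move=> d; rewrite [X in _ * X]big_mkcond -big_split /=; apply: eq_bigr => j _.
  by rewrite /c; case: (f j); rewrite ?mulr1.
rewrite (eq_bigr _ (fun s _ => split _)) -big_distrr /= split.
have HX : forall s, \prod_(j < n | f j) ((X s j)%:R : rat) = (allS S A s)%:R.
  move=> s; rewrite prod_bool_nat; congr ((nat_of_bool _)%:R).
  apply/idP/idP => [/forallP H | /allP H]; [apply/allP => u uA' | apply/forallP => j].
    apply/implyP => /existsP[j /andP[fj /eqP <-]].
    by have := H j; rewrite fj.
  apply/implyP => fj; have := H (nth [::] A j) (mem_nth _ (ltn_ord j)).
  by rewrite HS fj.
rewrite (eq_bigr _ (fun s _ => HX s)) sum_bool_count.
have HN := Ncount S (erefl n) uA.
have HP : \prod_(j <- A | S j) hk A j = \prod_(j < n | f j) h j.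
  rewrite (big_nth [::]) big_mkord; apply: eq_bigl => j; by rewrite HS.
rewrite HP in HN.
have hpos : forall j : 'I_n, (0 < h j)%N.
  move=> j; rewrite /h /hk -has_count; apply/hasP; exists (nth [::] A j).
    exact: mem_nth. exact: prefix_refl.
have Pne : ((\prod_(j < n | f j) h j)%:R : rat) != 0.
  rewrite pnatr_eq0 -lt0n; apply: prodn_gt0 => j; exact: hpos.
rewrite -HN natrM prodfV natr_prod.
rewrite -natr_prod; field; exact: Pne.
Qed.

Close Scope ring_scope.

Lemma tvertsE ts : tverts (Node ts) = ([::], size ts) :: fverts ts.
Proof.
rewrite /= /fverts; congr cons; move: 0; elim: ts => [|t ts IH] i //=.
Qed.

Lemma fverts_cons i t f :
  fverts_from i (t :: f) = [seq (i :: p.1, p.2) | p <- tverts t] ++ fverts_from i.+1 f.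
Proof. by []. Qed.

Lemma ptree_ind2 (P : ptree -> Prop) :
  (forall ts, (forall t, t \in ts -> P t) -> P (Node ts)) -> forall t, P t.
Proof.
move=> H; fix IH 1; case=> ts; apply: H.
elim: ts => [|t ts IHts] u; first (rewrite in_nil => F; discriminate F).
rewrite inE => /orP[/eqP->|]; [exact: IH | exact: IHts].
Qed.

Lemma size_fverts_from i f : size (fverts_from i f) = size (fverts f).
Proof.
rewrite /fverts; elim: f i => [|t f IH] i //=.
by rewrite !size_cat !size_map (IH i.+1) (IH 1).
Qed.

Lemma size_fverts_cons ts f :
  size (fverts (Node ts :: f)) = (size (fverts ts) + size (fverts f)).+1.
Proof. by rewrite /fverts fverts_cons size_cat size_map tvertsE /= size_fverts_from. Qed.

Lemma fverts_heads i f p : p \in fverts_from i f -> exists j a, p.1 = j :: a /\ i <= j.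
Proof.
elim: f i => [|t f IH] i //=; rewrite mem_cat => /orP[/mapP[q _ ->] | /IH[j [a [e le]]]].
  by exists i, q.1.
by exists j, a; split => //; exact: ltnW.
Qed.

Lemma uniq_forest i f : (forall t, t \in f -> uniq (map fst (tverts t))) ->
  uniq (map fst (fverts_from i f)).
Proof.
elim: f i => [|t f IH] i //= H.
rewrite map_cat cat_uniq IH ?andbT; last by move=> u uf; apply: H; rewrite inE uf orbT.
rewrite -map_comp /=; apply/andP; split.
  rewrite (map_comp (cons i) fst) map_inj_uniq; first by apply: H; rewrite mem_head.
  by move=> x y [].
apply/hasPn => a /mapP[p pf ->] /=; apply/mapP => -[q _ /= e].
have [j [b [e' le]]] := fverts_heads pf; rewrite e' in e; case: e => e _.
by move: le; rewrite -e ltnn.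
Qed.

Lemma uniq_tree t : uniq (map fst (tverts t)).
Proof.
elim/ptree_ind2: t => ts IH; rewrite tvertsE /= uniq_forest // andbT.
apply/mapP => -[p pf e]; have [j [a [e' _]]] := fverts_heads pf.
by rewrite e' in e.
Qed.

Lemma uniq_addr f : uniq (map fst (fverts f)).
Proof. by apply: uniq_forest => t _; exact: uniq_tree. Qed.


Lemma type_size (l : seq (seq nat * nat)) r :
  (forall i, count (fun p => p.2 == i) l = nth 0 r i) -> size l = sumn r.
Proof.
move=> H.
have lt : forall p, p \in l -> p.2 < size r.
  move=> p pl; rewrite ltnNge; apply/negP => le.
  have := H p.2; rewrite nth_default // => /eqP; rewrite -leqn0 leqNgt -has_count.
  by move/negP; apply; apply/hasP; exists p.
rewrite sumnE (big_nth 0) big_mkord.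
rewrite (eq_bigr (fun i : 'I_(size r) => \sum_(p <- l) ((p.2 == i) : nat))); last first.
  by move=> i _; rewrite -H count_sumb.
rewrite exchange_big /= -sum1_size; apply: eq_big_seq => p pl.
rewrite (bigD1 (Ordinal (lt p pl))) //= eqxx big1 // => i ne.
case: (eqVneq p.2 i) => // e; move: ne; rewrite -val_eqE /= e eqxx //.
Qed.

Lemma nint_size r F : has_type r F -> size (ivs F) = nint r.
Proof.
move=> H; have sz := type_size H.
rewrite /ivs size_filter /nint.
have := count_predC (fun p : seq nat * nat => p.2 == 0) (fverts F).
have ec : count (fun p : seq nat * nat => 0 < p.2) (fverts F) =
    count (predC (fun p : seq nat * nat => p.2 == 0)) (fverts F).
  by apply: eq_count => p; rewrite /= lt0n.
rewrite sz H ec; case: r {H sz ec} => [|x r] /= e.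
  by rewrite add0n in e.
by apply/eqP; rewrite -(eqn_add2l x) e.
Qed.

Fixpoint cand (m : nat) : seq (seq ptree) :=
  if m is m'.+1 then [::] :: [seq Node ts :: f | ts <- cand m', f <- cand m']
  else [:: [::]].

Lemma cand_complete m f : size (fverts f) <= m -> f \in cand m.
Proof.
elim: m f => [|m IH] [|[ts] f]; rewrite ?size_fverts_cons // => le.
rewrite /= inE; apply/orP; right; apply: allpairs_f; apply: IH; lia.
Qed.

Definition has_typeb r F :=
  all (fun i => count (fun p => p.2 == i) (fverts F) == nth 0 r i) (iota 0 (size r))
  && all (fun p => p.2 < size r) (fverts F).

Lemma has_typeP r F : reflect (has_type r F) (has_typeb r F).
Proof.
apply: (iffP andP) => [[/allP H1 /allP H2] i | H].
  case: (ltnP i (size r)) => lt.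
    by apply/eqP; apply: H1; rewrite mem_iota.
  rewrite nth_default //; apply/eqP; rewrite -leqn0 leqNgt -has_count; apply/hasP => -[p pF /eqP e].
  by have := H2 p pF; rewrite e ltnNge lt.
split; first by apply/allP => i _; rewrite H.
apply/allP => p pl; rewrite ltnNge; apply/negP => le.
have := H p.2; rewrite nth_default // => /eqP; rewrite -leqn0 leqNgt -has_count.
by move/negP; apply; apply/hasP; exists p.
Qed.

Definition sF r := undup (filter (has_typeb r) (cand (sumn r))).

Lemma mem_sF r F : F \in sF r <-> has_type r F.
Proof.
rewrite /sF mem_undup mem_filter; split => [/andP[/has_typeP //] | H].
apply/andP; split; first exact/has_typeP.
by apply: cand_complete; rewrite (type_size H).
Qed.

Lemma uniq_sF r : uniq (sF r).
Proof. exact: undup_uniq. Qed.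

Close Scope ring_scope.

Definition Lc F lab k j : seq (nat * bool) :=
  [seq (c, false) | c <- iota 1 (ideg F j)] ++
  (if Defs.proper F lab j then [::] else [seq (c, true) | c <- iota 1 k]).

Lemma mem_pairb (s : seq nat) c (b b' : bool) :
  ((c, b) \in [seq (x, b') | x <- s]) = (b == b') && (c \in s).
Proof.
apply/mapP/andP => [[x xs [-> ->]] | [/eqP -> cs]]; first by rewrite eqxx.
by exists c.
Qed.

Lemma mem_Lc F lab k j c : (c \in Lc F lab k j) = color_ok F lab k j c.
Proof.
case: c => c b; rewrite /Lc /color_ok mem_cat /=.
case: b; case: (Defs.proper F lab j) => /=;
  rewrite ?in_nil ?orbF ?orFb !mem_pairb ?mem_iota /= ?orbF //; apply/idP/idP; lia.
Qed.

Lemma uniq_Lc F lab k j : uniq (Lc F lab k j).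
Proof.
rewrite /Lc cat_uniq map_inj_uniq ?iota_uniq //=; last by move=> x y [].
case: (Defs.proper F lab j); rewrite /= ?andbT //.
rewrite map_inj_uniq ?iota_uniq ?andbT //; last by move=> x y [].
by apply/hasPn => -[x b] /mapP[y _ [_ ->]]; rewrite mem_pairb.
Qed.

Lemma size_Lc F lab k j :
  size (Lc F lab k j) = ideg F j + (if Defs.proper F lab j then 0 else k).
Proof.
by rewrite /Lc size_cat size_map size_iota; case: (Defs.proper F lab j); rewrite //= size_map size_iota.
Qed.

Fixpoint cols (Ls : seq (seq (nat * bool))) : seq (seq (nat * bool)) :=
  if Ls is L :: Ls' then [seq c :: t | c <- L, t <- cols Ls'] else [:: [::]].

Lemma size_cols Ls : size (cols Ls) = \prod_(L <- Ls) size L.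
Proof. by elim: Ls => [|L Ls IH]; rewrite ?big_nil ?big_cons //= size_allpairs IH. Qed.

Lemma uniq_cols Ls : all uniq Ls -> uniq (cols Ls).
Proof.
elim: Ls => [|L Ls IH] //= /andP[uL uLs]; apply: allpairs_uniq => //; first exact: IH.
by move=> [x t] [y u] _ _ /= [-> ->].
Qed.

Lemma mem_cols Ls t : (t \in cols Ls) =
  (size t == size Ls) && all (fun j => nth (0, false) t j \in nth [::] Ls j) (iota 0 (size t)).
Proof.
elim: Ls t => [|L Ls IH] [|c t] //=.
  by apply/negbTE/allpairsP => -[[x u] [_ _]].
rewrite eqSS.
apply/allpairsP/idP => [[[x u] /= [xL uc [-> ->]]] | /and3P[st cL H]].
  rewrite xL /=; move: uc; rewrite IH => /andP[-> H] /=.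
  rewrite -[1]/(1+0) iotaDl all_map; apply: sub_all H => i; by rewrite /preim /= ?add1n.
exists (c, t); split => //=; rewrite IH st /=.
rewrite -[1]/(1+0) iotaDl all_map in H; apply: sub_all H => i; by rewrite /preim /= ?add1n.
Qed.

Close Scope ring_scope.

Definition labof (A s : seq (seq nat)) := [seq (index u s).+1 | u <- A].

Lemma uniq_ivsA F : uniq (map fst (ivs F)).
Proof.
apply: subseq_uniq (uniq_addr F); apply: map_subseq; exact: filter_subseq.
Qed.

Lemma iaddrE F j : iaddr F j = nth [::] (map fst (ivs F)) j.
Proof.
rewrite /iaddr; case: (ltnP j (size (ivs F))) => h; first by rewrite (nth_map ([::], 0)).
by rewrite !nth_default ?size_map.
Qed.

Lemma all_iota (T : eqType) (x0 : T) (P : pred T) (A : seq T) :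
  all P A = all (fun j => P (nth x0 A j)) (iota 0 (size A)).
Proof. by rewrite -{1}(mkseq_nth x0 A) /mkseq all_map. Qed.

Lemma proper_labof F s j : j < size (ivs F) ->
  Defs.proper F (labof (map fst (ivs F)) s) j = propA (map fst (ivs F)) s (nth [::] (map fst (ivs F)) j).
Proof.
set A := map fst (ivs F) => jn.
have sA : size A = size (ivs F) by rewrite size_map.
rewrite /Defs.proper /propA (all_iota [::]) sA.
apply: eq_in_all => j' /=; rewrite mem_iota add0n => j'n.
by rewrite !iaddrE -/A /labof !(nth_map [::]) ?sA // ltnS.
Qed.

Lemma index_map_iota (s : seq (seq nat)) : uniq s -> map (index^~ s) s = iota 0 (size s).
Proof.
move=> us; apply: (@eq_from_nth _ 0); rewrite ?size_map ?size_iota // => i lt.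
by rewrite (nth_map [::]) // nth_iota // index_uniq.
Qed.

Lemma labof_perm (A s : seq (seq nat)) : uniq A -> perm_eq s A ->
  perm_eq (labof A s) (iota 1 (size A)).
Proof.
move=> uA ps; have us : uniq s by rewrite (perm_uniq ps).
rewrite /labof (map_comp succn (index^~ s)).
rewrite -(perm_size ps) -[1]/(1+0) iotaDl -(index_map_iota us); apply: perm_map.
by apply: perm_map; rewrite perm_sym.
Qed.

Lemma labof_inj (A s s' : seq (seq nat)) : uniq A -> perm_eq s A -> perm_eq s' A ->
  labof A s = labof A s' -> s = s'.
Proof.
move=> uA ps ps' e.
have us : uniq s by rewrite (perm_uniq ps).
have ei : {in A, forall u, index u s = index u s'}.
  move/eq_in_map: e => H u uA2; by case: (H u uA2).
apply: (@eq_from_nth _ [::]); first by rewrite (perm_size ps) (perm_size ps').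
move=> i lt; set u := nth [::] s i.
have us_ : u \in s by exact: mem_nth.
have uA3 : u \in A by rewrite -(perm_mem ps).
have : index u s' = i by rewrite -ei // index_uniq.
move=> <-; rewrite nth_index //; by rewrite (perm_mem ps').
Qed.

Lemma perms_labof (A : seq (seq nat)) : uniq A ->
  perm_eq (permutations (iota 1 (size A))) (map (labof A) (permutations A)).
Proof.
move=> uA; apply: uniq_perm; first exact: permutations_uniq.
  rewrite map_inj_in_uniq ?permutations_uniq //.
  by move=> s s'; rewrite !mem_permutations => ps ps'; apply: labof_inj.
have U : uniq (map (labof A) (permutations A)).
  rewrite map_inj_in_uniq ?permutations_uniq //.
  by move=> s s'; rewrite !mem_permutations => ps ps'; apply: labof_inj.
have sub : {subset map (labof A) (permutations A) <= permutations (iota 1 (size A))}.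
  move=> x /mapP[s]; rewrite !mem_permutations => ps ->.
  exact: labof_perm.
have sz : size (permutations (iota 1 (size A))) <= size (map (labof A) (permutations A)).
  by rewrite size_map !size_permutations ?iota_uniq // size_iota.
have [_ H] := uniq_min_size U sub sz.
by move=> x; rewrite H.
Qed.

Open Scope ring_scope.

Lemma forest_sum F k :
 \sum_(lab <- permutations (iota 1 (size (ivs F))))
    ((\prod_(j <- iota 0 (size (ivs F))) size (Lc F lab k j))%N%:R : rat)
 = (size (ivs F))`!%:R * \prod_(v <- ivs F) ((v.2 + k)%:R - k%:R / (hook F v.1)%:R).
Proof.
set A := map fst (ivs F).
have sA : size A = size (ivs F) by rewrite size_map.
have uA : uniq A := uniq_ivsA F.
rewrite -sA (perm_big _ (perms_labof uA)) big_map.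
rewrite (big_nth ([::], 0)) big_mkord.
pose a (j : nat) : rat := (ideg F j + k)%:R.
pose b (j : nat) : rat := - k%:R.
transitivity (\sum_(s <- permutations A) \prod_(j < size A)
   (a j + b j * (propA A s (nth [::] A j))%:R)).
  apply: eq_bigr => s _; rewrite natr_prod.
  have -> : iota 0 (size A) = index_iota 0 (size A) by rewrite /index_iota subn0.
  rewrite big_mkord.
  apply: eq_bigr => j _; have lt := ltn_ord j; rewrite size_Lc proper_labof -?sA // -/A.
  by rewrite /a /b; case: (propA A s (nth [::] A j)); rewrite /= ?natrD ?addn0 ?addrK ?mulr0 ?addr0 ?mulr1 // addrK.
rewrite weighted // sA; congr (_ * _); apply: eq_bigr => j _.
rewrite /a /b /ideg /hook /hk /A count_map (nth_map ([::], 0)) -?sA // mulNr.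
by [].
Qed.

Close Scope ring_scope.

Definition pairsF r := [seq (F, lab) | F <- sF r, lab <- permutations (iota 1 (nint r))].
Definition colsF k F lab := cols [seq Lc F lab k j | j <- iota 0 (size (ivs F))].
Definition sC r k : seq cforest := [seq (x, c) | x <- pairsF r, c <- colsF k x.1 x.2].

Lemma uniq_sC r k : uniq (sC r k).
Proof.
apply: allpairs_uniq_dep.
- apply: allpairs_uniq; [exact: uniq_sF | exact: permutations_uniq |].
  by move=> [? ?] [? ?] _ _ /= [-> ->].
- move=> x _; apply: uniq_cols; apply/allP => L /mapP[j _ ->]; exact: uniq_Lc.
- by move=> [x c] [y d] _ _ /= [e1 e2]; subst y; rewrite e2.
Qed.

Lemma nth_Lcs F lab k j : j < size (ivs F) ->
  nth [::] [seq Lc F lab k j | j <- iota 0 (size (ivs F))] j = Lc F lab k j.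
Proof. by move=> lt; rewrite (nth_map 0) ?size_iota // nth_iota. Qed.

Lemma mem_sC r k x : x \in sC r k <-> is_kcolored r k x.
Proof.
case: x => [[F lab] col]; rewrite /is_kcolored; split.
- case/allpairsPdep => -[F' lab'] [c [/allpairsP[[F'' lab''] [/= HF Hl [e1 e2]]] Hc [e3 e4]]].
  subst; move/mem_sF: HF => HF; have ns := nint_size HF.
  move: Hl; rewrite mem_permutations => Hl.
  move: Hc; rewrite mem_cols size_map size_iota => /andP[/eqP sc /allP Hc].
  move=> ->; split => //.
  + by rewrite (perm_size Hl) size_iota ns.
  + move=> j lt; have ltn : j < size (ivs F'') by rewrite -sc.
    rewrite -mem_Lc -(nth_Lcs lab'' k ltn); apply: Hc.
    by rewrite mem_iota.
- case=> HF sl pl sc Hc; apply/allpairsPdep; exists (F, lab), col; split => //.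
    by apply: allpairs_f; [exact/mem_sF | rewrite mem_permutations].
  rewrite mem_cols size_map size_iota sc eqxx /=; apply/allP => j.
  rewrite mem_iota add0n /= => lt.
  rewrite nth_Lcs // mem_Lc; apply: Hc; by rewrite sc.
Qed.

Open Scope ring_scope.


Close Scope ring_scope.
Theorem lemma3p1_aux (r : seq nat) (k : nat) :
  exists (sF : seq (seq ptree)) (sC : seq cforest),
    [/\ uniq sF,
        (forall F, F \in sF <-> has_type r F),
        uniq sC,
        (forall x, x \in sC <-> is_kcolored r k x) &
        ((size sC)%:R =
           \sum_(F <- sF) ((nint r)`!)%:R *
              \prod_(v <- ivs F)
                 (((v.2 + k)%:R - k%:R / (hook F v.1)%:R) : rat))%R].
Proof.
exists (sF r), (sC r k); split.
- exact: uniq_sF.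
- exact: mem_sF.
- exact: uniq_sC.
- exact: mem_sC.
rewrite /sC size_allpairs_dep sumnE big_map /pairsF big_allpairs natr_sum.
rewrite big_seq [RHS]big_seq; apply: eq_bigr => F /mem_sF HF /=.
rewrite natr_sum -(nint_size HF) -forest_sum; apply: eq_bigr => lab _.
by rewrite /colsF size_cols big_map.
Qed.

End Aux.
Unset Implicit Arguments.

Theorem lemma3p1 (r : seq nat) (k : nat) :
  exists (sF : seq (seq ptree)) (sC : seq cforest),
    [/\ uniq sF,
        (forall F, F \in sF <-> has_type r F),
        uniq sC,
        (forall x, x \in sC <-> is_kcolored r k x) &
        ((size sC)%:R =
           \sum_(F <- sF) ((nint r)`!)%:R *
              \prod_(v <- ivs F)
                 (((v.2 + k)%:R - k%:R / (hook F v.1)%:R) : rat))%R].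
Proof.
exact: Aux.lemma3p1_aux.
Qed.
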